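(* There is no sequence of maps $\varphi_0,\varphi_1,\varphi_2,\ldots$, each defined on the ideal $\mathcal{M}$ of meager subsets of $\mathbb{R}$ and taking values in the family of closed nowhere dense subsets of $\mathbb{R}$, such that both of the following hold: (a) $A\subseteq\bigcup_{i<\omega}\varphi_i(A)$ for every meager $A\subseteq\mathbb{R}$; (b) $\varphi_i(A+r)=\varphi_i(A)+r$ for every meager $A$, every $r\in\mathbb{R}$ and every $i<\omega$.
   Context: $A+r=\{a+r:a\in A\}$. *)

(* Defs.v *)
From Stdlib Require Export Reals.
Open Scope R_scope.

Definition is_open (U : R -> Prop) : Prop :=
  forall x, U x -> exists eps, 0 < eps /\ forall y, Rabs (y - x) < eps -> U y.

Definition is_closed (F : R -> Prop) : Prop :=
  is_open (fun x => ~ F x).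

Definition closure (A : R -> Prop) : R -> Prop :=
  fun x => forall eps, 0 < eps -> exists y, A y /\ Rabs (y - x) < eps.

Definition nowhere_dense (A : R -> Prop) : Prop :=
  ~ exists U : R -> Prop, is_open U /\ (exists x, U x) /\
      (forall x, U x -> closure A x).

Definition meager (A : R -> Prop) : Prop :=
  exists N : nat -> R -> Prop, (forall n, nowhere_dense (N n)) /\
    (forall x, A x -> exists n, N n x).

Definition translate (A : R -> Prop) (r : R) : R -> Prop :=
  fun y => exists a, A a /\ y = a + r.

(* Main.v *)
Require Import Defs.
From Stdlib Require Import Reals.
From Stdlib Require Import Lra Lia ZArith Cantor FunctionalExtensionality PropExtensionality.
Open Scope R_scope.

Definition Qs (x : R) : Prop := exists (z : Z) (n : nat), x = IZR z / INR (S n).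

Lemma INRS_pos n : 0 < INR (S n).
Proof. apply lt_0_INR; lia. Qed.

Lemma Qs_add x y : Qs x -> Qs y -> Qs (x + y).
Proof.
  intros [z1 [n1 ->]] [z2 [n2 ->]].
  exists (z1 * Z.of_nat (S n2) + z2 * Z.of_nat (S n1))%Z, (n1 * n2 + n1 + n2)%nat.
  replace (S (n1 * n2 + n1 + n2)) with (S n1 * S n2)%nat by lia.
  rewrite plus_IZR, !mult_IZR, <- !INR_IZR_INZ, mult_INR.
  pose proof (INRS_pos n1); pose proof (INRS_pos n2).
  field; lra.
Qed.

Lemma Qs_opp x : Qs x -> Qs (- x).
Proof.
  intros [z [n ->]]. exists (- z)%Z, n. rewrite opp_IZR.
  pose proof (INRS_pos n). field; lra.
Qed.

Lemma Qs_0 : Qs 0.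
Proof. exists 0%Z, 0%nat. simpl. field. Qed.

Lemma translate_Qs t : Qs t -> translate Qs t = Qs.
Proof.
  intros Ht. apply functional_extensionality; intro y.
  apply propositional_extensionality; split.
  - intros [a [Ha ->]]. now apply Qs_add.
  - intros Hy. exists (y - t). split; [|ring].
    now apply Qs_add; [|apply Qs_opp].
Qed.

Lemma IZR_nat z : IZR z = INR (Z.to_nat z) - INR (Z.to_nat (- z)).
Proof.
  destruct z; simpl.
  - lra.
  - rewrite INR_IZR_INZ, positive_nat_Z. lra.
  - rewrite INR_IZR_INZ, positive_nat_Z.
    rewrite <- Pos2Z.opp_pos, opp_IZR. lra.
Qed.

Definition fQ (k : nat) : R :=
  let (p, n) := Cantor.of_nat k in
  let (a, b) := Cantor.of_nat p in (INR a - INR b) / INR (S n).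

Lemma Qs_meager : meager Qs.
Proof.
  exists (fun k x => x = fQ k). split.
  - intros k [U [HU [[x0 Hx0] Hcl]]].
    destruct (HU x0 Hx0) as [eps [Heps Hb]].
    assert (Hc : forall y, U y -> y = fQ k).
    { intros y Hy. specialize (Hcl y Hy).
      destruct (Req_dec y (fQ k)) as [|Hne]; auto.
      destruct (Hcl (Rabs (y - fQ k))) as [y' [-> Hy']].
      + apply Rabs_pos_lt. lra.
      + rewrite <- Rabs_Ropp in Hy'. replace (- (fQ k - y)) with (y - fQ k) in Hy' by ring. lra. }
    assert (U (x0 + eps / 2)) as H2 by (apply Hb; rewrite Rabs_right; lra).
    apply Hc in H2. apply Hc in Hx0. lra.
  - intros x [z [n ->]].
    exists (Cantor.to_nat (Cantor.to_nat (Z.to_nat z, Z.to_nat (- z)), n)).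
    unfold fQ. rewrite !Cantor.cancel_of_to. now rewrite <- IZR_nat.
Qed.

Lemma Qs_dense y eps : 0 < eps -> exists q, Qs q /\ Rabs (q - y) < eps.
Proof.
  intros He.
  destruct (archimed (/ eps)) as [Hup _].
  assert (Hn : exists n : nat, / eps < INR (S n)).
  { destruct (INR_unbounded (/ eps)) as [n Hn]. exists n. rewrite S_INR. lra. }
  destruct Hn as [n Hn].
  pose proof (INRS_pos n) as Hp.
  destruct (archimed (y * INR (S n))) as [H1 H2].
  exists (IZR (up (y * INR (S n))) / INR (S n)). split.
  - eexists; eexists; reflexivity.
  - assert (Hinv : / INR (S n) < eps).
    { rewrite <- (Rinv_inv eps). apply Rinv_lt_contravar; [|exact Hn].
      apply Rmult_lt_0_compat; [now apply Rinv_0_lt_compat | lra]. }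
    set (u := IZR (up (y * INR (S n)))) in *.
    assert (E : u / INR (S n) - y = (u - y * INR (S n)) / INR (S n)) by (field; lra).
    rewrite E. rewrite Rabs_right.
    + apply (Rle_lt_trans _ (1 / INR (S n))); [|lra].
      unfold Rdiv. apply Rmult_le_compat_r; [left; now apply Rinv_0_lt_compat | lra].
    + apply Rle_ge. unfold Rdiv. apply Rmult_le_pos; [lra | left; now apply Rinv_0_lt_compat].
Qed.

Theorem mainTheorem1 :
  ~ exists phi : nat -> (R -> Prop) -> (R -> Prop),
      (forall i A, meager A -> is_closed (phi i A) /\ nowhere_dense (phi i A)) /\
      (forall A, meager A -> forall x, A x -> exists i, phi i A x) /\
      (forall i A r, meager A ->
         forall x, phi i (translate A r) x <-> translate (phi i A) r x).
Proof.
  intros [phi [Hnd [Hcov Htr]]].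
  pose proof Qs_meager as QM.
  destruct (Hcov Qs QM 0 Qs_0) as [i Hi].
  assert (Hinv : forall t, Qs t -> phi i Qs (0 + t)).
  { intros t Ht. pose proof (proj2 (Htr i Qs t QM (0 + t))) as H.
    rewrite translate_Qs in H by exact Ht. apply H. exists 0. split; auto. }
  destruct (Hnd i Qs QM) as [_ Hn]. apply Hn.
  exists (fun _ => True). split; [|split].
  - intros x _. exists 1. split; [lra | auto].
  - now exists 0.
  - intros x _ eps He. destruct (Qs_dense x eps He) as [q [Hq Hd]].
    exists (0 + q). split; [now apply Hinv | now rewrite Rplus_0_l].
Qed.
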